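(* Let $\mathbb{K}$ be a field of characteristic $0$, $I\subset\mathbb{K}[x_1,\dots,x_n]$ a full monomial ideal with $\mathbb{K}[\mathbf{x}]/I$ finite-dimensional, and $\mathfrak{g}=\operatorname{Der}(\mathbb{K}[\mathbf{x}]/I)=\bigoplus_{\alpha\in\mathbb{Z}^n}\mathfrak{g}_\alpha$ its weight decomposition. Let $\alpha\in\mathbb{Z}^n$. Then: (1) If $\alpha\in\mathbb{Z}_{\ge0}^n$, then $\dim\mathfrak{g}_\alpha=\#E_\alpha$. (2) If $\alpha\notin\mathbb{Z}_{\ge0}^n$, $\alpha+e_k\in\mathbb{Z}_{\ge0}^n$ for some $1\le k\le n$, and $\dim\mathfrak{g}_{\alpha+e_k}=0$, then $\dim\mathfrak{g}_\alpha=\#E_\alpha$; moreover this number equals $1$ if $\alpha+e_k\in\operatorname{supp}^c(I)$ and $0$ otherwise.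
   Context: Let $e_1,\dots,e_n$ be the standard basis of $\mathbb{Z}^n$. For a monomial ideal $I\subset\mathbb{K}[\mathbf{x}]$, $\operatorname{supp}(I)=\{m\in\mathbb{Z}^n_{\ge0}\mid \mathbf{x}^m\in I\}$ and $\operatorname{supp}^c(I)=\mathbb{Z}^n_{\ge0}\setminus\operatorname{supp}(I)$. $I$ is full if $x_i\notin I$ for all $i$. The algebra $\mathbb{K}[\mathbf{x}]/I$ is $\mathbb{Z}^n$-graded with $\bar{\mathbf{x}}^m$ (image of $\mathbf{x}^m$) of degree $m$, equivalently the torus $T=\mathbb{G}_m^n$ acts by $\mathbf{t}\cdot x_i=t_ix_i$. $\operatorname{Der}(\mathbb{K}[\mathbf{x}]/I)$ is the Lie algebra of $\mathbb{K}$-derivations (equal to the Lie algebra of $\operatorname{Aut}_{\mathbb{K}}(\mathbb{K}[\mathbf{x}]/I)$), and for $\alpha\in\mathbb{Z}^n$, $\mathfrak{g}_\alpha$ is the weight space for the adjoint action of $T$, i.e. the space of derivations $\partial$ with $\partial(\bar{\mathbf{x}}^m)\in\mathbb{K}\,\bar{\mathbf{x}}^{m+\alpha}$ for all $m\in\mathbb{Z}^n_{\ge0}$ (where $\bar{\mathbf{x}}^{m+\alpha}:=0$ if $m+\alpha\notin\mathbb{Z}^n_{\ge0}$). For $\alpha\in\mathbb{Z}^n$, $E_\alpha:=\{e_i\mid \alpha+e_i\in\operatorname{supp}^c(I)\}$. *)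

(* Defs.v *)
From HB Require Import structures.
From mathcomp Require Import all_boot all_order all_algebra.
From mathcomp Require Import mpoly.
Set Implicit Arguments. Unset Strict Implicit. Unset Printing Implicit Defensive.
Import Order.TTheory GRing.Theory Num.Theory.
Local Open Scope ring_scope.

Section Defs.
Variables (K : fieldType) (n : nat).
Local Notation P := {mpoly K[n]}.
Implicit Types (I : pred P) (D : P -> P).

Definition is_ideal I :=
  [/\ (0 : P) \in I,
      (forall p q, p \in I -> q \in I -> p + q \in I) &
      (forall a p, p \in I -> a * p \in I)].

(** Monomial ideal: an ideal containing every monomial of each of its elements
    (equivalently, an ideal generated by monomials). *)
Definition is_monomial_ideal I :=
  is_ideal I /\
  (forall p, p \in I -> forall m, m \in msupp p -> 'X_[m] \in I).

Definition full_ideal I := forall i : 'I_n, 'X_i \notin I.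

Definition quot_findim I :=
  exists s : seq P, forall p : P,
    exists c : 'I_(size s) -> K, p - \sum_(j < size s) c j *: s`_j \in I.

Definition nonneg (v : 'I_n -> int) := forall i, 0 <= v i.

Definition to_mon (v : 'I_n -> int) : option 'X_{1..n} :=
  if [forall i, 0 <= v i] then Some [multinom absz (v i) | i < n] else None.

(** bar x^v in K[x]/I (represented by a polynomial), := 0 if v is not >= 0. *)
Definition xbar (v : 'I_n -> int) : P :=
  if to_mon v is Some m then 'X_[m] else 0.

Definition in_suppc I (v : 'I_n -> int) : bool :=
  if to_mon v is Some m then 'X_[m] \notin I else false.

Definition vadd_int (a b : 'I_n -> int) : 'I_n -> int := fun i => a i + b i.
Definition unitv (k : 'I_n) : 'I_n -> int := fun i => (i == k)%:R.
Definition mon_int (m : 'X_{1..n}) : 'I_n -> int := fun i => (m i)%:Z.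

(** A K-linear self-map of K[x]/I, given through a map on representatives
    that respects congruence modulo I, which is a K-derivation of K[x]/I. *)
Definition is_der_quot I D :=
  [/\ (forall p q, p - q \in I -> D p - D q \in I),
      (forall p q, D (p + q) - (D p + D q) \in I),
      (forall (c : K) p, D (c *: p) - c *: D p \in I) &
      (forall p q, D (p * q) - (p * D q + D p * q) \in I)].

Definition in_weight I (alpha : 'I_n -> int) D :=
  is_der_quot I D /\
  forall m : 'X_{1..n}, exists c : K,
      D 'X_[m] - c *: xbar (vadd_int (mon_int m) alpha) \in I.

(** dim g_alpha = d : there are d elements of g_alpha whose classes (maps on
    K[x]/I) are linearly independent and span g_alpha. *)
Definition weight_dim I (alpha : 'I_n -> int) (d : nat) :=
  exists b : 'I_d -> P -> P,
    [/\ (forall j, in_weight I alpha (b j)),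
        (forall c : 'I_d -> K,
           (forall p, \sum_(j < d) c j *: b j p \in I) -> forall j, c j = 0) &
        (forall D, in_weight I alpha D ->
           exists c : 'I_d -> K, forall p, D p - \sum_(j < d) c j *: b j p \in I)].

Definition E_set I (alpha : 'I_n -> int) : {set 'I_n} :=
  [set i : 'I_n | in_suppc I (vadd_int alpha (unitv i))].

End Defs.

(* Main.v *)
Require Import Defs.
From HB Require Import structures.
From mathcomp Require Import all_boot all_order all_algebra.
From mathcomp Require Import mpoly.
From mathcomp Require Import zify ring.
Import Order.TTheory GRing.Theory Num.Theory.
Local Open Scope ring_scope.
Set Implicit Arguments. Unset Strict Implicit.

Section S.
Variables (K : fieldType) (n : nat) (I : pred {mpoly K[n]}).
Hypothesis idI : is_ideal I.
Local Notation P := {mpoly K[n]}.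

Lemma I0 : (0:P) \in I. Proof. by case: idI. Qed.
Lemma ID p q : p \in I -> q \in I -> p + q \in I. Proof. by case: idI => _ h _; apply: h. Qed.
Lemma IM a p : p \in I -> a * p \in I. Proof. by case: idI => _ _ h; apply: h. Qed.
Lemma IMr a p : p \in I -> p * a \in I. Proof. by rewrite mulrC; apply: IM. Qed.
Lemma IN p : p \in I -> - p \in I.
Proof. by move=> h; rewrite -mulN1r; apply: IM. Qed.
Lemma IB p q : p \in I -> q \in I -> p - q \in I.
Proof. by move=> h1 h2; apply: ID => //; apply: IN. Qed.
Lemma IZ c p : p \in I -> c *: p \in I.
Proof. by move=> h; rewrite -mul_mpolyC; apply: IM. Qed.
Lemma Isum (T : Type) (r : seq T) (Q : pred T) (F : T -> P) :
  (forall x, Q x -> F x \in I) -> \sum_(x <- r | Q x) F x \in I.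
Proof. move=> h; elim/big_rec: _ => [|x y qx hy]; [exact: I0| apply: ID => //; exact: h]. Qed.
Lemma INE p : (- p \in I) = (p \in I).
Proof. by apply/idP/idP => h; [rewrite -(opprK p)|]; apply: IN. Qed.
End S.

Lemma to_monP n (v : 'I_n -> int) : nonneg v ->
  to_mon v = Some [multinom absz (v i) | i < n].
Proof. by move=> h; rewrite /to_mon; case: forallP => // []; move=> i; apply: h. Qed.

Lemma to_monN n (v : 'I_n -> int) : ~ nonneg v -> to_mon v = None.
Proof. by move=> h; rewrite /to_mon; case: forallP => // H; case: h => i; apply: H. Qed.

Lemma xbar_ext (K : fieldType) n (v w : 'I_n -> int) : v =1 w -> xbar K v = xbar K w.
Proof.
move=> e; rewrite /xbar /to_mon.
rewrite (eq_forallb (fun i => congr1 (fun x => 0 <= x) (e i))).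
case: ifP => // _.
by congr (mpolyX _ _); apply/mnmP => i; rewrite !mnmE e.
Qed.

Lemma xbarP (K : fieldType) n (v : 'I_n -> int) : nonneg v ->
  xbar K v = 'X_[[multinom absz (v i) | i < n]].
Proof. by move=> h; rewrite /xbar to_monP. Qed.

Lemma xbarN (K : fieldType) n (v : 'I_n -> int) : ~ nonneg v -> xbar K v = 0.
Proof. by move=> h; rewrite /xbar to_monN. Qed.

Lemma in_suppcE (K : fieldType) n (I : pred {mpoly K[n]}) v : (0 : {mpoly K[n]}) \in I ->
  in_suppc I v = (xbar K v \notin I).
Proof. by move=> h0; rewrite /in_suppc /xbar; case: to_mon => // ; rewrite h0. Qed.

Lemma xbar_add (K : fieldType) n (v : 'I_n -> int) (w : 'X_{1..n}) : nonneg v ->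
  xbar K (vadd_int v (mon_int w)) = xbar K v * 'X_[w].
Proof.
move=> h; have h' : nonneg (vadd_int v (mon_int w)).
  by move=> i; rewrite /vadd_int /mon_int; have := h i; lia.
rewrite !xbarP // -mpolyXD; congr (mpolyX _ _); apply/mnmP => i.
rewrite mnmDE !mnmE /vadd_int /mon_int; have := h i; lia.
Qed.

Lemma xbar_deriv (K : fieldType) n (a : 'I_n -> int) j (m : 'X_{1..n}) :
  nonneg (vadd_int a (unitv j)) ->
  xbar K (vadd_int a (unitv j)) * mderiv j 'X_[m] = (m j)%:R *: xbar K (vadd_int (mon_int m) a).
Proof.
move=> h; rewrite mderivX; case: (posnP (m j)) => [->|mj]; first by rewrite !scale0r mulr0.
rewrite -scalerAr -xbar_add //; congr (_ *: _); apply: xbar_ext => i.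
rewrite /vadd_int /mon_int /unitv mnmBE mnm1E.
case: (eqVneq i j) => [->|ne]; rewrite ?eqxx /=.
  lia.
rewrite ?(negbTE ne) 1?eq_sym ?(negbTE ne) /=; lia.
Qed.

Definition Dder (K : fieldType) n (b : 'I_n -> int) (j : 'I_n) (p : {mpoly K[n]}) :=
  xbar K b * mderiv j p.

Lemma Dder_der (K : fieldType) n (I : pred {mpoly K[n]}) b j :
  is_monomial_ideal I ->
  (forall m, 'X_[m] \in I -> Dder b j 'X_[m] \in I) -> is_der_quot I (Dder b j).
Proof.
case=> idI mI hX.
have hI : forall p, p \in I -> Dder b j p \in I.
  move=> p pI; rewrite (mpolyE p) /Dder (big_morph (mderiv j) (@mderivD n K j) (@mderiv0 n K j)) mulr_sumr.
  rewrite big_seq; apply: (Isum idI) => m.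
  move=> mp.
  by rewrite mderivZ -scalerAr; apply: (IZ idI); apply: hX; apply: mI mp.
split.
- by move=> p q h; rewrite /Dder -mulrBr -linearB; apply: hI.
- by move=> p q; rewrite /Dder linearD mulrDr subrr; apply: I0.
- by move=> c p; rewrite /Dder linearZ /= -scalerAr subrr; apply: I0.
- move=> p q; rewrite /Dder mderivM.
  have -> : xbar K b * (mderiv j p * q + p * mderiv j q) -
     (p * (xbar K b * mderiv j q) + xbar K b * mderiv j p * q) = 0 by ring.
  exact: I0.
Qed.

Lemma chain (K : fieldType) n (I : pred {mpoly K[n]}) D :
  is_ideal I -> is_der_quot I D ->
  forall p, D p - \sum_(i < n) mderiv i p * D 'X_i \in I.
Proof.
move=> idI [hc hD hZ hM].
pose S p := \sum_(i < n) mderiv i p * D 'X_i.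
rewrite -/S.
have SD p q : S (p + q) = S p + S q.
  by rewrite /S -big_split; apply: eq_bigr => i _; rewrite mderivD mulrDl.
have SM p q : S (p * q) = q * S p + p * S q.
  rewrite /S !mulr_sumr -big_split; apply: eq_bigr => i _ /=; rewrite mderivM; ring.
have SC c : S c%:MP = 0.
  by rewrite /S big1 // => i _; rewrite mderivC mul0r.
have SX k : S 'X_k = D 'X_k.
  rewrite /S (bigD1 k) //= big1 => [|i ik].
    rewrite mderivX mnm1E eqxx.
    have -> : (U_(k) - U_(k))%MM = 0%MM by apply/mnmP => i; rewrite mnmBE mnm0E subnn.
    by rewrite mpolyX0 scale1r mul1r addr0.
  by rewrite mderivX mnm1E eq_sym (negbTE ik) scale0r mul0r.
have D0 : D 0 \in I.
  by have := hD 0 0; rewrite addr0 opprD addrA subrr sub0r (INE idI).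
have D1 : D 1 \in I.
  have := hM 1 1; rewrite mul1r mulr1 mul1r.
  have -> : D 1 - (D 1 + D 1) = - D 1 by ring.
  by rewrite (INE idI).
have DC c : D c%:MP \in I.
  have := hZ c 1; rewrite -alg_mpolyC => h.
  by rewrite -[D _](subrK (c *: D 1)); apply: (ID idI) => //; apply: (IZ idI).
pose Q p := D p - S p \in I.
have QD p q : Q p -> Q q -> Q (p + q).
  rewrite /Q SD => h1 h2.
  have -> : D (p + q) - (S p + S q) = (D (p + q) - (D p + D q)) + (D p - S p) + (D q - S q) by ring.
  by apply: (ID idI) => //; apply: (ID idI).
have QM p q : Q p -> Q q -> Q (p * q).
  rewrite /Q SM => h1 h2.
  have -> : D (p * q) - (q * S p + p * S q) = (D (p * q) - (p * D q + D p * q)) + q * (D p - S p) + p * (D q - S q) by ring.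
  apply: (ID idI); [apply: (ID idI); [exact: hM|] |]; exact: (IM idI).
have QC c : Q c%:MP by rewrite /Q SC subr0.
have Q1 : Q 1 by rewrite -mpolyC1.
have Q0 : Q 0 by rewrite -(@mpolyC0 n K) ; apply: QC.
have QX k : Q 'X_k by rewrite /Q SX subrr; apply: (I0 idI).
move=> p; rewrite -/(Q p) (mpolyE p).
apply (big_ind Q Q0 QD) => m _.
rewrite -mul_mpolyC; apply QM => //.
rewrite mpolyXE_id; apply (big_ind Q Q1 QM) => i _.
elim: (m i) => [|k ih]; first by rewrite expr0.
by rewrite exprS; apply QM.
Qed.


Lemma mderivXi (K : fieldType) n (i k : 'I_n) :
  mderiv k ('X_i : {mpoly K[n]}) = if i == k then 1 else 0.
Proof.
rewrite mderivX mnm1E; case: eqP => [->|_]; last by rewrite scale0r.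
have -> : (U_(k) - U_(k))%MM = 0%MM by apply/mnmP => l; rewrite mnmBE mnm0E subnn.
by rewrite mpolyX0 scale1r.
Qed.

Lemma wdim_gen (K : fieldType) n (I : pred {mpoly K[n]}) (a : 'I_n -> int) :
  is_ideal I ->
  (forall j, j \in E_set I a -> in_weight I a (Dder (vadd_int a (unitv j)) j)) ->
  weight_dim I a #|E_set I a|.
Proof.
move=> idI hw; set E := E_set I a.
pose x i := xbar K (vadd_int a (unitv i)).
have xE i : (i \in E) = (x i \notin I).
  by rewrite /E /E_set inE in_suppcE //; apply: (I0 idI).
exists (fun j => Dder (vadd_int a (unitv (enum_val j))) (enum_val j)); split.
- by move=> j; apply: hw; apply: enum_valP.
- move=> c hc j0; set i := enum_val j0.
  have := hc 'X_i; rewrite (bigD1 j0) //= big1 => [|j jj0].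
    rewrite /Dder mderivXi eqxx mulr1 addr0 -/(x i) => h.
    apply/eqP; apply: contraT => cn.
    have : x i \notin I by rewrite -xE /i enum_valP.
    by rewrite -[x i](scalerK cn) (IZ idI).
  rewrite /Dder mderivXi; case: eqP => [e|_]; last by rewrite mulr0 scaler0.
  by move/enum_val_inj: e => e; rewrite e eqxx in jj0.
- move=> D [hD hX].
  have [cf hcf] : exists cf : 'I_n -> K, forall i, D 'X_i - cf i *: x i \in I.
    apply: (@fin_all_exists _ (fun _ => K) (fun i c => D 'X_i - c *: x i \in I)) => i.
    have [c hc] := hX (U_(i))%MM; exists c.
    suff <- : xbar K (vadd_int (mon_int (U_(i))%MM) a) = x i by [].
    apply: xbar_ext => k; rewrite /vadd_int /mon_int /unitv mnm1E eq_sym; lia.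
  exists (fun j => cf (enum_val j)) => p.
  pose T i := cf i *: (x i * mderiv i p).
  have e1 : \sum_(j < #|E|) cf (enum_val j) *: Dder (vadd_int a (unitv (enum_val j))) (enum_val j) p
      = \sum_(i in E) T i by rewrite (big_enum_val T).
  have e2 : \sum_(i < n) mderiv i p * D 'X_i =
     \sum_(i < n) mderiv i p * (D 'X_i - cf i *: x i) + (\sum_(i in E) T i + \sum_(i in [predC E]) T i).
    have -> : \sum_(i in E) T i + \sum_(i in [predC E]) T i = \sum_(i < n) T i.
      rewrite [RHS](bigID (mem E)) /=; congr (_ + _); apply: eq_bigl => i //.
    rewrite -big_split /=; apply: eq_bigr => i _.
    rewrite /T -!mul_mpolyC; ring.
  rewrite e1; have := chain idI hD p; rewrite e2 => h.
  have -> : D p - \sum_(i in E) T i = (D p - (\sum_(i < n) mderiv i p * (D 'X_i - cf i *: x i) +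
     (\sum_(i in E) T i + \sum_(i in [predC E]) T i))) + \sum_(i < n) mderiv i p * (D 'X_i - cf i *: x i)
     + \sum_(i in [predC E]) T i by ring.
  apply: (ID idI); [apply: (ID idI) => //|].
    by apply: (Isum idI) => i _; apply: (IM idI).
  apply: (Isum idI) => i; rewrite inE xE negbK => xi.
  by rewrite /T; apply: (IZ idI); apply: (IMr idI).
Qed.

Lemma part1_w (K : fieldType) n (I : pred {mpoly K[n]}) (a : 'I_n -> int) j :
  is_monomial_ideal I -> nonneg a -> in_weight I a (Dder (vadd_int a (unitv j)) j).
Proof.
move=> mI na.
have naj : nonneg (vadd_int a (unitv j)).
  by move=> i; have := na i; rewrite /vadd_int /unitv; case: (i == j) => /=; lia.
have key m : Dder (vadd_int a (unitv j)) j 'X_[m] = (m j)%:R *: (xbar K a * 'X_[m]).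
  rewrite /Dder xbar_deriv // -xbar_add //; congr (_ *: _); apply: xbar_ext => i.
  by rewrite /vadd_int addrC.
split.
- apply: Dder_der => // m h; rewrite key; case: mI => idI _.
  by apply: (IZ idI); apply: (IM idI).
- move=> m; exists (m j)%:R; rewrite /Dder xbar_deriv // subrr.
  by case: mI => idI _; apply: (I0 idI).
Qed.

Lemma dim0_X (K : fieldType) n (I : pred {mpoly K[n]}) (b : 'I_n -> int) i :
  is_monomial_ideal I -> nonneg b -> weight_dim I b 0 ->
  xbar K (vadd_int b (unitv i)) \in I.
Proof.
move=> mI nb [B [_ _ hs]].
have [c hc] := hs _ (part1_w i mI nb).
have := hc 'X_i; rewrite big_ord0 subr0 /Dder mderivXi eqxx mulr1 //.
Qed.

Lemma part2_w (K : fieldType) n (I : pred {mpoly K[n]}) (a : 'I_n -> int) k :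
  is_monomial_ideal I -> full_ideal I -> nonneg (vadd_int a (unitv k)) ->
  (forall i, xbar K (vadd_int (vadd_int a (unitv k)) (unitv i)) \in I) ->
  in_weight I a (Dder (vadd_int a (unitv k)) k).
Proof.
move=> mI fI nb hb; have idI : is_ideal I by case: mI.
set b := vadd_int a (unitv k).
have key m : Dder b k 'X_[m] = (m k)%:R *: xbar K (vadd_int (mon_int m) a).
  by rewrite /Dder xbar_deriv.
split.
- apply: Dder_der => // m h; rewrite key.
  case: (posnP (m k)) => [->|mk]; first by rewrite scale0r; apply: (I0 idI).
  apply: (IZ idI).
  case: (boolP [exists i, (0 < (m - U_(k))%MM i)%N]) => [/existsP [i hi]|].
    have nbi : nonneg (vadd_int b (unitv i)).
      by move=> l; have := nb l; rewrite /b /vadd_int /unitv; case: (l == i); case: (l == k) => /=; lia.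
    have -> : xbar K (vadd_int (mon_int m) a) =
       xbar K (vadd_int (vadd_int b (unitv i)) (mon_int (m - U_(k) - U_(i))%MM)).
      apply: xbar_ext => l; move: hi; rewrite /b /vadd_int /mon_int /unitv !mnmBE !mnm1E.
      case: (eqVneq l k) => [elk|lk]; case: (eqVneq l i) => [eli|li]; subst;
        rewrite ?eqxx /=; try lia.
    by rewrite xbar_add //; apply: (IMr idI).
  move/existsPn => h0; have emU : m = U_(k)%MM.
    apply/mnmP => l; have := h0 l; rewrite mnmBE mnm1E.
    case: (eqVneq k l) => [<-|kl] /=; lia.
  by have := fI k; rewrite -emU h.
- move=> m; exists (m k)%:R; rewrite key subrr; exact: (I0 idI).
Qed.

Unset Implicit Arguments. Set Strict Implicit.

Theorem lemma3p1 (K : fieldType) (n : nat) (I : pred {mpoly K[n]})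
  (charK0 : [pchar K] =i pred0)
  (monI : is_monomial_ideal I) (fullI : full_ideal I) (findimI : quot_findim I)
  (alpha : 'I_n -> int) :
  (nonneg alpha -> weight_dim I alpha #|E_set I alpha|) /\
  (forall k : 'I_n,
      ~ nonneg alpha -> nonneg (vadd_int alpha (unitv k)) ->
      weight_dim I (vadd_int alpha (unitv k)) 0 ->
      weight_dim I alpha #|E_set I alpha| /\
      #|E_set I alpha| = (if in_suppc I (vadd_int alpha (unitv k)) then 1 else 0)%N).
Proof.
have idI : is_ideal I by case: monI.
split.
  move=> na; apply: wdim_gen => // j _; exact: part1_w.
move=> k nna nb wd.
have ak : alpha k < 0.
  apply: contra_notT nna; rewrite -leNgt => h l.
  case: (eqVneq l k) => [-> //|lk]; have := nb l.
  by rewrite /vadd_int /unitv (negbTE lk) /= addr0.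
have nai i : i != k -> ~ nonneg (vadd_int alpha (unitv i)).
  move=> ik h; have := h k; rewrite /vadd_int /unitv eq_sym (negbTE ik) /=; lia.
have Ee : E_set I alpha = [set i | (i == k) && in_suppc I (vadd_int alpha (unitv k))].
  apply/setP => i; rewrite !inE; case: (eqVneq i k) => [-> //|ik] /=.
  by rewrite /in_suppc to_monN //; apply: nai.
split.
  apply: wdim_gen => // j; rewrite Ee inE => /andP [/eqP -> _].
  apply: part2_w => // i; exact: dim0_X.
rewrite Ee; case: ifP => _.
  by rewrite (_ : [set i | _] = [set k]) ?cards1 //; apply/setP => i; rewrite !inE andbT.
by rewrite (_ : [set i | _] = set0) ?cards0 //; apply/setP => i; rewrite !inE andbF.
Qed.
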